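(* Let $d\ge 1$, let $\gamma>0$ be real and let $\varepsilon>0$. There exists a positive integer $k$ (depending only on $d,\gamma,\varepsilon$, not on $n$ or $\lambda$) with the following property. For every $n$ and every partition $\lambda=(\lambda_1,\dots,\lambda_d)\vdash n$ with exactly $d$ parts satisfying $\lambda_j/n\ge\gamma$ for all $j=1,\dots,d$, there exist integers $1\le i\le d+1$ and $1\le q<k$ and a partition $\mu=(\mu_1,\dots,\mu_{d+1})$ of $n'=kn$ such that (1) $\mu_j=q\lambda_j$ for all $j\le i-1$; (2) $\mu_{j+1}=q\lambda_j$ for all $j$ with $i\le j\le d$ (and $\mu_i=(k-q)n$); (3) $|\Phi(\mu)-\Phi(\lambda)-1|<\varepsilon$.
   Context: For real numbers $x_1,\dots,x_k\ge 0$ with $x_1+\cdots+x_k=1$ define $\Phi(x_1,\dots,x_k)=\dfrac{1}{x_1^{x_1}\cdots x_k^{x_k}}$, with $0^0=1$. For a partition $\lambda=(\lambda_1,\dots,\lambda_k)\vdash n$ put $\Phi(\lambda)=\Phi(\lambda_1/n,\dots,\lambda_k/n)$ (zero parts may be appended without changing the value). *)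

(* Defs.v *)
From Stdlib Require Import Reals Lra Lia List Sorted.
Import ListNotations.
Open Scope R_scope.

(* x^x with the convention 0^0 = 1 (arguments are in [0,1] in all uses). *)
Definition xpowx (x : R) : R :=
  if Req_EM_T x 0 then 1 else Rpower x x.

Definition Phi (xs : list R) : R :=
  / fold_right Rmult 1 (map xpowx xs).

Definition sumn (l : list nat) : nat := fold_right Nat.add 0%nat l.

Definition is_partition (lam : list nat) (n : nat) : Prop :=
  sumn lam = n /\ Sorted ge lam /\ Forall (fun a => (0 < a)%nat) lam.

Definition Phi_part (lam : list nat) : R :=
  Phi (map (fun a => INR a / INR (sumn lam)) lam).

(* Main.v *)
Require Import Defs.
From Stdlib Require Import Reals Lra Lia List Sorted ZArith.
Import ListNotations.
Open Scope R_scope.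

Definition sumR (l : list R) := fold_right Rplus 0 l.

Lemma sumR_app l1 l2 : sumR (l1 ++ l2) = sumR l1 + sumR l2.
Proof. induction l1; simpl; [lra|]. unfold sumR in *; simpl; rewrite IHl1; lra. Qed.

Lemma sum_ext {A} (f g : A -> R) l : Forall (fun a => f a = g a) l ->
  sumR (map f l) = sumR (map g l).
Proof. induction 1; simpl; auto. unfold sumR in *; simpl. rewrite H, IHForall. lra. Qed.

Lemma sum_le {A} (f g : A -> R) l : Forall (fun a => f a <= g a) l ->
  sumR (map f l) <= sumR (map g l).
Proof. induction 1; unfold sumR in *; simpl; lra. Qed.

Lemma sum_lin {A} (c1 c2 : R) (g1 g2 : A -> R) l :
  sumR (map (fun a => c1 * g1 a + c2 * g2 a) l) = c1 * sumR (map g1 l) + c2 * sumR (map g2 l).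
Proof. induction l; unfold sumR in *; simpl; [ring|]. rewrite IHl. ring. Qed.

Lemma sum_scal {A} (c : R) (g : A -> R) l :
  sumR (map (fun a => c * g a) l) = c * sumR (map g l).
Proof. induction l; unfold sumR in *; simpl; [ring|]. rewrite IHl. ring. Qed.

Lemma sum_INR_div l (n : R) : sumR (map (fun a => INR a / n) l) = INR (sumn l) / n.
Proof. induction l; unfold sumR in *; simpl; [unfold Rdiv; ring|]. rewrite IHl, plus_INR. unfold Rdiv; ring. Qed.

Lemma sumn_app l1 l2 : sumn (l1 ++ l2) = (sumn l1 + sumn l2)%nat.
Proof. induction l1; simpl; lia. Qed.

Lemma sumn_map q l : sumn (map (Nat.mul q) l) = (q * sumn l)%nat.
Proof. induction l; simpl; lia. Qed.

Lemma In_le_sumn a l : In a l -> (a <= sumn l)%nat.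
Proof. induction l; simpl; [tauto|]. intros [->|H]; [lia|]. specialize (IHl H); lia. Qed.

Lemma nth_map_mul q l j : nth j (map (Nat.mul q) l) 0%nat = (q * nth j l 0)%nat.
Proof. revert j; induction l; intros [|j]; simpl; auto; lia. Qed.

Lemma sorted_map_mul q l : Sorted ge l -> Sorted ge (map (Nat.mul q) l).
Proof.
  induction 1; simpl; constructor; auto.
  inversion H0; simpl; constructor. unfold ge in *; apply Nat.mul_le_mono_l; auto.
Qed.

Lemma insert_exists (l : list nat) x : Sorted ge l ->
  exists m, (m <= length l)%nat /\ Sorted ge (firstn m l ++ x :: skipn m l).
Proof.
  induction l as [|a l IH]; intros Hs.
  - exists 0%nat; simpl; split; [lia|]. repeat constructor.
  - inversion Hs; subst. destruct (le_lt_dec a x).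
    + exists 0%nat; simpl; split; [lia|]. constructor; auto; constructor; unfold ge; lia.
    + destruct (IH H1) as [m [Hm Hs']]. exists (S m); simpl; split; [lia|].
      constructor; auto. destruct m; simpl.
      * constructor; unfold ge; lia.
      * destruct l; simpl. constructor; unfold ge; lia. inversion H2; constructor; auto.
Qed.

Lemma split_sum (f : nat -> R) m L x :
  sumR (map f (firstn m L ++ x :: skipn m L)) = f x + sumR (map f L).
Proof.
  rewrite map_app, sumR_app. simpl. unfold sumR at 2. simpl. fold (sumR (map f (skipn m L))).
  rewrite <- (firstn_skipn m L) at 3. rewrite map_app, sumR_app. lra.
Qed.

Lemma xpowx_pos y : 0 < y -> xpowx y = exp (y * ln y).
Proof. intros H. unfold xpowx. destruct (Req_EM_T y 0). lra. reflexivity. Qed.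

Lemma Phi_eq xs : Forall (fun y => 0 < y) xs ->
  Phi xs = exp (- sumR (map (fun y => y * ln y) xs)).
Proof.
  intros H. unfold Phi. rewrite exp_Ropp. f_equal.
  induction H; simpl. rewrite exp_0; auto.
  rewrite IHForall, xpowx_pos by auto. unfold sumR; simpl. rewrite exp_plus. reflexivity.
Qed.

Definition fe (n a : nat) : R := INR a / INR n * ln (INR a / INR n).

Lemma Phi_part_eq l : Forall (fun a => (0 < a)%nat) l -> (0 < sumn l)%nat ->
  Phi_part l = exp (- sumR (map (fe (sumn l)) l)).
Proof.
  intros H Hn. unfold Phi_part. rewrite Phi_eq, map_map. reflexivity.
  apply Forall_map. eapply Forall_impl; [|exact H]. intros a Ha; simpl.
  apply Rdiv_lt_0_compat; apply lt_0_INR; auto.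
Qed.
Ltac nz := repeat split; intro; lra.
Lemma ln_le_xm1 x : 0 < x -> ln x <= x - 1.
Proof. intros H. pose proof (exp_ineq1_le (ln x)). rewrite exp_ln in H0; lra. Qed.

Lemma ln_diff_up a b : 0 < a -> 0 < b -> ln a - ln b <= a / b - 1.
Proof.
  intros Ha Hb. replace (ln a - ln b) with (ln (a / b)).
  apply ln_le_xm1. apply Rdiv_lt_0_compat; lra.
  unfold Rdiv. rewrite ln_mult, ln_Rinv; try lra. apply Rinv_0_lt_compat; lra.
Qed.

Lemma ln_le' x y : 0 < x -> x <= y -> ln x <= ln y.
Proof. intros H1 H2. destruct (Req_dec x y). subst; lra. left; apply ln_increasing; lra. Qed.

Lemma key (T t d : R) : T <= 0 -> 0 < t < 1 ->
  Rabs (t - exp (-T) / (exp (-T) + 1)) <= d ->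
  Rabs (exp (-((1-t)*ln(1-t) + t*ln t + t*T)) - exp (-T) - 1)
    <= d^2 * (exp (-T) + 1)^3.
Proof.
  intros HT Ht Hd.
  set (P := exp (-T)) in *.
  assert (HP : 1 <= P) by (pose proof (exp_ineq1_le (-T)); unfold P; lra).
  set (s := P / (P+1)).
  assert (Hs1 : 0 < s) by (unfold s; apply Rdiv_lt_0_compat; lra).
  assert (Hs2 : 1 - s = / (P+1)) by (unfold s; field; nz).
  assert (Hs3 : 0 < 1 - s) by (rewrite Hs2; apply Rinv_0_lt_compat; lra).
  set (B := ln (P+1)).
  assert (HeB : exp B = P + 1) by (apply exp_ln; lra).
  assert (Hls : ln s = - T - B).
  { unfold s, Rdiv. rewrite ln_mult, ln_Rinv. unfold P at 1; rewrite ln_exp; unfold B; lra. lra. unfold P; apply exp_pos. apply Rinv_0_lt_compat; lra. }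
  assert (Hl1s : ln (1 - s) = - B) by (rewrite Hs2, ln_Rinv; unfold B; lra).
  set (A := -((1-t)*ln(1-t) + t*ln t + t*T)).
  assert (HBA : B - A = t * (ln t - ln s) + (1-t) * (ln (1-t) - ln (1-s))).
  { rewrite Hls, Hl1s. unfold A. ring. }
  assert (Hlow : 0 <= B - A).
  { rewrite HBA.
    pose proof (ln_diff_up s t Hs1 (proj1 Ht)).
    pose proof (ln_diff_up (1-s) (1-t) Hs3 ltac:(lra)).
    assert (t * (ln s - ln t) <= t * (s / t - 1)) by (apply Rmult_le_compat_l; lra).
    assert ((1-t) * (ln (1-s) - ln (1-t)) <= (1-t) * ((1-s) / (1-t) - 1)) by (apply Rmult_le_compat_l; lra).
    replace (t * (s / t - 1)) with (s - t) in H1 by (field; try nz).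
    replace ((1-t) * ((1-s) / (1-t) - 1)) with (t - s) in H2 by (field; try nz).
    assert (t * (ln t - ln s) = - (t * (ln s - ln t))) by ring.
    assert ((1-t) * (ln (1-t) - ln (1-s)) = - ((1-t) * (ln (1-s) - ln (1-t)))) by ring.
    lra. }
  assert (Hup : B - A <= (t - s)^2 * (P+1)^2 / P).
  { rewrite HBA.
    pose proof (ln_diff_up t s (proj1 Ht) Hs1).
    pose proof (ln_diff_up (1-t) (1-s) ltac:(lra) Hs3).
    assert (t * (ln t - ln s) <= t * (t / s - 1)) by (apply Rmult_le_compat_l; lra).
    assert ((1-t) * (ln (1-t) - ln (1-s)) <= (1-t) * ((1-t) / (1-s) - 1)) by (apply Rmult_le_compat_l; lra).
    assert (E : t * (t / s - 1) + (1-t) * ((1-t) / (1-s) - 1) = (t - s)^2 * (P+1)^2 / P).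
    { rewrite Hs2. unfold s. field; nz. }
    lra. }
  assert (HeA : exp A = exp B * exp (A - B)) by (rewrite <- exp_plus; f_equal; ring).
  pose proof (exp_ineq1_le (A - B)).
  assert (exp (A - B) <= 1).
  { destruct (Req_dec A B). rewrite H0. replace (B-B) with 0 by ring. rewrite exp_0. lra.
    left. rewrite <- exp_0. apply exp_increasing. lra. }
  assert (Hdiff : 0 <= exp B - exp A <= (P+1) * (B - A)).
  { rewrite HeA, HeB. split; nra. }
  fold A. rewrite Rabs_left1 by lra.
  assert (Hts : (t - s)^2 <= d^2).
  { rewrite <- pow2_abs.
    apply pow_incr. split; [apply Rabs_pos| exact Hd]. }
  assert ((t - s)^2 * (P+1)^2 / P <= (t-s)^2 * (P+1)^2).
  { unfold Rdiv. rewrite <- (Rmult_1_r ((t-s)^2 * (P+1)^2)) at 2. apply Rmult_le_compat_l. apply Rmult_le_pos; apply pow2_ge_0.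
    rewrite <- Rinv_1. apply Rinv_le_contravar; lra. }
  assert (0 <= (t-s)^2) by apply pow2_ge_0.
  assert ((P+1) * ((t-s)^2 * (P+1)^2) <= (P+1) * (d^2 * (P+1)^2)).
  { apply Rmult_le_compat_l. lra. apply Rmult_le_compat_r. apply pow2_ge_0. exact Hts. }
  assert ((P+1) * (B - A) <= (P+1) * ((t-s)^2 * (P+1)^2)).
  { apply Rmult_le_compat_l; lra. }
  replace (d^2 * (P+1)^3) with ((P+1) * (d^2 * (P+1)^2)) by ring.
  lra.
Qed.

Lemma exp_le' x y : x <= y -> exp x <= exp y.
Proof. intros H. destruct (Req_dec x y). subst; lra. left; apply exp_increasing; lra. Qed.

Theorem lemma3 (d : nat) (gamma eps : R) :
  (1 <= d)%nat -> 0 < gamma -> 0 < eps ->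
  exists k : nat, (0 < k)%nat /\
    forall (n : nat) (lam : list nat),
      is_partition lam n -> length lam = d ->
      (forall j : nat, (1 <= j <= d)%nat -> INR (nth (j - 1) lam 0%nat) / INR n >= gamma) ->
      exists (i q : nat) (mu : list nat),
        (1 <= i <= d + 1)%nat /\ (1 <= q < k)%nat /\
        is_partition mu (k * n) /\ length mu = (d + 1)%nat /\
        (forall j : nat, (1 <= j <= i - 1)%nat ->
           nth (j - 1) mu 0%nat = (q * nth (j - 1) lam 0%nat)%nat) /\
        (forall j : nat, (i <= j <= d)%nat ->
           nth j mu 0%nat = (q * nth (j - 1) lam 0%nat)%nat) /\
        nth (i - 1) mu 0%nat = ((k - q) * n)%nat /\
        Rabs (Phi_part mu - Phi_part lam - 1) < eps.
Proof.
  intros Hd Hg He.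
  set (C := (/ gamma + 1) ^ 3).
  assert (HC : 0 < C) by (unfold C; apply pow_lt; pose proof (Rinv_0_lt_compat _ Hg); lra).
  destruct (archimed (C / eps + 2)) as [Hup _].
  assert (HCe : 0 < C / eps) by (apply Rdiv_lt_0_compat; lra).
  assert (Hz : (0 <= up (C / eps + 2))%Z) by (apply le_IZR; lra).
  set (k := Z.to_nat (up (C / eps + 2))).
  assert (Hk : INR k = IZR (up (C / eps + 2))) by (unfold k; rewrite INR_IZR_INZ, Z2Nat.id; auto).
  assert (Hk2 : INR k > C / eps + 2) by lra.
  exists k. split. { apply INR_lt. simpl. lra. }
  intros n lam [Hsum [Hsort Hpos]] Hlen Hgam.
  assert (Hn : (0 < n)%nat).
  { destruct lam as [|a l]; simpl in Hlen; [lia|]. inversion Hpos; simpl in Hsum; lia. }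
  assert (HnR : 0 < INR n) by (apply lt_0_INR; auto).
  assert (HkR : 0 < INR k) by lra.
  set (T := sumR (map (fe n) lam)).
  assert (HPl : Phi_part lam = exp (- T)) by (unfold T; rewrite Phi_part_eq, Hsum; auto; lia).
  assert (HT0 : T <= 0).
  { unfold T. replace 0 with (sumR (map (fun _ : nat => 0) lam)).
    2:{ clear. induction lam; unfold sumR in *; simpl; lra. }
    apply sum_le. apply Forall_forall. intros a Ha.
    pose proof (In_le_sumn a lam Ha). rewrite Hsum in H.
    assert (0 < INR a) by (apply lt_0_INR; rewrite Forall_forall in Hpos; auto).
    assert (INR a <= INR n) by (apply le_INR; auto).
    unfold fe. set (y := INR a / INR n).
    assert (0 < y) by (apply Rdiv_lt_0_compat; lra).
    assert (y <= 1) by (unfold y; apply (Rmult_le_reg_r (INR n)); auto; field_simplify; lra).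
    assert (ln y <= 0) by (rewrite <- ln_1; apply ln_le'; lra).
    nra. }
  assert (HTg : ln gamma <= T).
  { unfold T.
    assert (E : ln gamma = sumR (map (fun a => ln gamma * (INR a / INR n)) lam)).
    { rewrite sum_scal, sum_INR_div, Hsum. field. lra. }
    rewrite E. apply sum_le. apply Forall_forall. intros a Ha.
    destruct (In_nth lam a 0%nat Ha) as [j [Hj Hja]].
    specialize (Hgam (S j) ltac:(lia)). replace (S j - 1)%nat with j in Hgam by lia.
    rewrite Hja in Hgam.
    unfold fe. set (y := INR a / INR n) in *.
    assert (ln gamma <= ln y) by (apply ln_le'; lra).
    rewrite Rmult_comm. apply Rmult_le_compat_l; lra. }
  set (P := exp (- T)).
  assert (HP1 : 1 <= P) by (pose proof (exp_ineq1_le (-T)); unfold P; lra).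
  assert (HPg : P <= / gamma).
  { unfold P. rewrite <- (exp_ln (/ gamma)) by (apply Rinv_0_lt_compat; lra).
    apply exp_le'. rewrite ln_Rinv; lra. }
  set (s := P / (P + 1)).
  assert (Hs : 1/2 <= s < 1).
  { unfold s; split; [apply (Rmult_le_reg_r (P+1)); [lra|]; field_simplify; lra|].
    apply (Rmult_lt_reg_r (P+1)); [lra|]. field_simplify; lra. }
  set (r := INR k * s).
  destruct (base_Int_part r) as [Hr1 Hr2].
  assert (Hipos : (0 < Int_part r)%Z).
  { apply lt_IZR. unfold r in *. nra. }
  set (q := Z.to_nat (Int_part r)).
  assert (Hq : INR q = IZR (Int_part r)) by (unfold q; rewrite INR_IZR_INZ, Z2Nat.id; [reflexivity|apply Z.lt_le_incl; exact Hipos]).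
  assert (Hq1 : (1 <= q)%nat).
  { assert (q <> 0%nat) by (intro Hq0; rewrite Hq0 in Hq; simpl in Hq; apply IZR_lt in Hipos; lra). lia. }
  assert (Hqk : (q < k)%nat).
  { apply INR_lt. rewrite Hq. unfold r in *. nra. }
  set (t := INR q / INR k).
  assert (HqR : 0 < INR q) by (apply lt_0_INR; lia).
  assert (HqkR : INR q < INR k) by (apply lt_INR; auto).
  assert (Ht : 0 < t < 1).
  { unfold t; split. apply Rdiv_lt_0_compat; lra.
    apply (Rmult_lt_reg_r (INR k)); auto. field_simplify; lra. }
  assert (Hts : Rabs (t - s) <= / INR k).
  { assert (E1 : t * INR k = INR q) by (unfold t; field; lra).
    assert (E2 : / INR k * INR k = 1) by (field; lra).
    assert (E3 : s * INR k = r) by (unfold r; ring).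
    rewrite Rabs_left1.
    - apply (Rmult_le_reg_r (INR k)); auto. rewrite E2.
      replace (- (t - s) * INR k) with (s * INR k - t * INR k) by ring. rewrite E1, E3. lra.
    - apply (Rmult_le_reg_r (INR k)); auto. rewrite Rmult_0_l.
      replace ((t - s) * INR k) with (t * INR k - s * INR k) by ring. rewrite E1, E3. lra. }
  set (L := map (Nat.mul q) lam).
  set (x := ((k - q) * n)%nat).
  destruct (insert_exists L x (sorted_map_mul q lam Hsort)) as [m [Hm Hsm]].
  assert (HLlen : length L = d) by (unfold L; rewrite length_map; auto).
  set (mu := firstn m L ++ x :: skipn m L).
  assert (HLpos : Forall (fun a => (0 < a)%nat) L).
  { unfold L. apply Forall_map. eapply Forall_impl; [|exact Hpos]. intros a Ha; simpl in *; nia. }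
  assert (Hmupos : Forall (fun a => (0 < a)%nat) mu).
  { unfold mu. rewrite <- (firstn_skipn m L) in HLpos. apply Forall_app in HLpos.
    destruct HLpos. apply Forall_app; split; auto. constructor; auto. unfold x; nia. }
  assert (Hmusum : sumn mu = (k * n)%nat).
  { unfold mu. rewrite sumn_app. simpl.
    assert (sumn L = (q * n)%nat) by (unfold L; rewrite sumn_map, Hsum; auto).
    rewrite <- (firstn_skipn m L), sumn_app in H. unfold x.
    assert ((k - q) * n + q * n = k * n)%nat.
    { rewrite <- Nat.mul_add_distr_r. f_equal. lia. }
    lia. }
  assert (HfL : length (firstn m L) = m) by (apply firstn_length_le; lia).
  exists (S m), q, mu.
  split; [lia|]. split; [lia|]. split; [split; [|split]; auto|].
  split. { unfold mu. rewrite length_app, HfL. simpl. rewrite length_skipn. lia. }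
  split.
  { intros j Hj. unfold mu. rewrite app_nth1 by lia. rewrite nth_firstn.
    replace (j - 1 <? m)%nat with true by (symmetry; apply Nat.ltb_lt; lia).
    unfold L; apply nth_map_mul. }
  split.
  { intros j Hj. unfold mu. rewrite app_nth2 by lia. rewrite HfL.
    replace (j - m)%nat with (S (j - 1 - m)) by lia. simpl.
    rewrite nth_skipn. replace (m + (j - 1 - m))%nat with (j - 1)%nat by lia.
    unfold L; apply nth_map_mul. }
  split.
  { unfold mu. rewrite app_nth2 by lia. rewrite HfL. replace (S m - 1 - m)%nat with 0%nat by lia. reflexivity. }
  assert (HPm : Phi_part mu = exp (- ((1 - t) * ln (1 - t) + t * ln t + t * T))).
  { rewrite Phi_part_eq, Hmusum by (auto; lia). f_equal. f_equal.
    unfold mu. rewrite split_sum.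
    assert (Hx : fe (k * n) x = (1 - t) * ln (1 - t)).
    { unfold fe, x. replace (INR ((k - q) * n) / INR (k * n)) with (1 - t); auto.
      rewrite !mult_INR, minus_INR by lia. unfold t. field. lra. }
    rewrite Hx. enough (sumR (map (fe (k * n)) L) = t * ln t + t * T) by lra. unfold L. rewrite map_map.
    rewrite (sum_ext _ (fun a => t * ln t * (INR a / INR n) + t * fe n a)).
    - rewrite sum_lin, sum_INR_div, Hsum. unfold T. field. lra.
    - eapply Forall_impl; [|exact Hpos]. intros a Ha. simpl.
      assert (0 < INR a) by (apply lt_0_INR; auto).
      unfold fe. replace (INR (q * a) / INR (k * n)) with (t * (INR a / INR n)).
      2:{ rewrite !mult_INR. unfold t. field. lra. }
      rewrite ln_mult. ring. lra. apply Rdiv_lt_0_compat; lra. }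
  rewrite HPm, HPl.
  pose proof (key T t (/ INR k) HT0 Ht Hts) as HK. fold P in HK |- *.
  eapply Rle_lt_trans; [exact HK|].
  assert (HP3 : (P + 1) ^ 3 <= C) by (unfold C; apply pow_incr; lra).
  assert (Hik : / INR k <= 1) by (rewrite <- Rinv_1; apply Rinv_le_contravar; lra).
  assert (Hik0 : 0 < / INR k) by (apply Rinv_0_lt_compat; lra).
  assert ((/ INR k) ^ 2 * (P + 1) ^ 3 <= / INR k * C).
  { replace ((/ INR k) ^ 2 * (P + 1) ^ 3) with (/ INR k * (/ INR k * (P + 1) ^ 3)) by ring. apply Rmult_le_compat_l; [lra|]. assert (0 <= (P+1)^3) by (apply pow_le; lra). nra. }
  assert (/ INR k * C < eps).
  { apply (Rmult_lt_reg_r (INR k)); auto. replace (/ INR k * C * INR k) with C by (field; lra).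
    apply (Rmult_lt_reg_r (/ eps)). apply Rinv_0_lt_compat; lra.
    replace (eps * INR k * / eps) with (INR k) by (field; lra). unfold Rdiv in Hk2. lra. }
  lra.
Qed.
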